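(* Let $f:(\mathbb R^2,q)\to(\mathbb R^3,p)$ be a smooth germ with a corank 1 singularity at $q$ whose curvature parabola $\Delta_p$ is a non-degenerate parabola or a half-line, and let $(u,v)$ be a coordinate system with $f_u(q)\neq0$, $f_v(q)=0$, $|f_u(q)|=|f_{vv}(q)|=1$ and $\langle f_u(q),f_{vv}(q)\rangle=0$. Then $$\kappa_a(p)=\big(\langle f_{uu},f_{vv}\rangle-\langle f_{uv},f_{vv}\rangle^2\big)(q).$$
   Context: $T_pM=\operatorname{im}df_q$, $N_pM$ its orthogonal complement with a fixed orientation. First fundamental form $I(X,Y)=\langle df_qX,df_qY\rangle$; second fundamental form $II$: the symmetric bilinear map $T_q\mathbb R^2\times T_q\mathbb R^2\to N_pM$ with $II(\partial_u,\partial_u)=f_{uu}(q)^\perp$, $II(\partial_u,\partial_v)=f_{uv}(q)^\perp$, $II(\partial_v,\partial_v)=f_{vv}(q)^\perp$ ($\perp$ = orthogonal projection to $N_pM$). Curvature parabola $\Delta_p=\{II(X,X): I(X,X)=1\}\subset N_pM$. Axial vector $v_a$: if $\Delta_p$ is a non-degenerate parabola, the unit vector along its axis of symmetry pointing to its interior; if $\Delta_p$ is a half-line, the unit vector in the direction in which the half-line extends. Axial curvature $\kappa_a(p)=\min\{\langle II(X,X),v_a\rangle: I(X,X)=1\}$. *)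

(* Defs.v *)
From HB Require Import structures.
From mathcomp Require Import all_boot all_order all_algebra.
From mathcomp Require Import all_classical all_reals all_analysis.
Set Implicit Arguments. Unset Strict Implicit. Unset Printing Implicit Defensive.
Import Order.TTheory GRing.Theory Num.Theory.
Import numFieldNormedType.Exports.
Local Open Scope classical_set_scope.
Local Open Scope ring_scope.

Section Defs.
Variable R : realType.

Definition dot (a b : 'rV[R]_3) : R := \sum_(i < 3) a 0 i * b 0 i.

Definition eu : 'rV[R]_2 := delta_mx 0 0.
Definition ev : 'rV[R]_2 := delta_mx 0 1.

Fixpoint iterD (vs : seq 'rV[R]_2) (f : 'rV[R]_2 -> 'rV[R]_3) :
    'rV[R]_2 -> 'rV[R]_3 :=
  if vs is v :: vs' then 'D_v (iterD vs' f) else f.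

Definition smooth (f : 'rV[R]_2 -> 'rV[R]_3) : Prop :=
  forall (vs : seq 'rV[R]_2) (x : 'rV[R]_2), differentiable (iterD vs f) x.

Variables (f : 'rV[R]_2 -> 'rV[R]_3) (q : 'rV[R]_2).

Definition f_u := 'D_eu f q.
Definition f_v := 'D_ev f q.
Definition f_uu := 'D_eu ('D_eu f) q.
Definition f_uv := 'D_ev ('D_eu f) q.
Definition f_vv := 'D_ev ('D_ev f) q.

(* Jacobian matrix of f at q (rows f_u, f_v); corank 1 = rank 1 *)
Definition jacobian : 'M[R]_(2, 3) := col_mx f_u f_v.
Definition corank1 : Prop := \rank jacobian = 1%N.

Definition df (X : 'rV[R]_2) : 'rV[R]_3 := 'D_X f q.

Definition I_ff (X Y : 'rV[R]_2) : R := dot (df X) (df Y).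

Definition tangent_space : set 'rV[R]_3 := range df.
Definition normal_space : set 'rV[R]_3 :=
  [set n | forall t, tangent_space t -> dot n t = 0].

Definition perp (w : 'rV[R]_3) : 'rV[R]_3 :=
  xget 0 [set n | normal_space n /\ tangent_space (w - n)].

(* second fundamental form: symmetric bilinear extension of
   II(du,du) = f_uu^perp, II(du,dv) = f_uv^perp, II(dv,dv) = f_vv^perp *)
Definition II_ff (X Y : 'rV[R]_2) : 'rV[R]_3 :=
  (X 0 0 * Y 0 0) *: perp f_uu
  + (X 0 0 * Y 0 1 + X 0 1 * Y 0 0) *: perp f_uv
  + (X 0 1 * Y 0 1) *: perp f_vv.

Definition curvature_parabola : set 'rV[R]_3 :=
  [set II_ff X X | X in [set X | I_ff X X = 1]].

End Defs.

(* A subset of R^3 is a non-degenerate parabola with axis direction v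
   (unit, pointing to the interior) *)
Definition parabola_with_axis (R : realType) (D : set 'rV[R]_3) (v : 'rV[R]_3)
  : Prop :=
  exists (c e : 'rV[R]_3) (a : R),
    [/\ 0 < a, dot e e = 1, dot v v = 1, dot e v = 0 &
        D = [set c + s *: e + (a * s ^+ 2) *: v | s in [set: R]]].

Definition halfline_with_direction (R : realType) (D : set 'rV[R]_3)
  (v : 'rV[R]_3) : Prop :=
  exists c : 'rV[R]_3,
    dot v v = 1 /\ D = [set c + s *: v | s in [set s : R | 0 <= s]].

Definition nondegenerate_parabola (R : realType) (D : set 'rV[R]_3) : Prop :=
  exists v, parabola_with_axis D v.
Definition half_line (R : realType) (D : set 'rV[R]_3) : Prop :=
  exists v, halfline_with_direction D v.

Definition axial_vector (R : realType) (D : set 'rV[R]_3) (v : 'rV[R]_3)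
  : Prop := parabola_with_axis D v \/ halfline_with_direction D v.

Definition is_min (R : realType) (S : set R) (m : R) : Prop :=
  S m /\ forall y, S y -> m <= y.

Definition is_axial_curvature (R : realType) (f : 'rV[R]_2 -> 'rV[R]_3)
  (q : 'rV[R]_2) (va : 'rV[R]_3) (kappa : R) : Prop :=
  is_min [set dot (II_ff f q X X) va | X in [set X | I_ff f q X X = 1]] kappa.

(* Main.v *)
Require Import Defs.
From HB Require Import structures.
From mathcomp Require Import all_boot all_order all_algebra.
From mathcomp Require Import all_classical all_reals all_analysis.
From mathcomp Require Import ring lra.
Import Order.TTheory GRing.Theory Num.Theory.
Import numFieldNormedType.Exports.
Set Implicit Arguments. Unset Strict Implicit.
Local Open Scope classical_set_scope.
Local Open Scope ring_scope.

Section H.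
Variable R : realType.
Implicit Types x y z : 'rV[R]_3.

Lemma dotE x y : dot x y = x 0 0 * y 0 0 + x 0 1 * y 0 1 + x 0 2%:R * y 0 2%:R.
Proof. rewrite /dot !big_ord_recr big_ord0 /= add0r. by congr (_ * _ + _ * _ + _ * _); congr (_ _ _); apply/val_inj. Qed.

Lemma dotC x y : dot x y = dot y x.
Proof. by rewrite !dotE; ring. Qed.
Lemma dotDl x y z : dot (x + y) z = dot x z + dot y z.
Proof. rewrite !dotE !mxE; ring. Qed.
Lemma dotZl (k : R) x z : dot (k *: x) z = k * dot x z.
Proof. rewrite !dotE !mxE; ring. Qed.
Lemma dotNl x z : dot (- x) z = - dot x z.
Proof. rewrite !dotE !mxE; ring. Qed.
Lemma dotBl x y z : dot (x - y) z = dot x z - dot y z.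
Proof. by rewrite dotDl dotNl. Qed.
Lemma dot0l z : dot 0 z = 0.
Proof. rewrite !dotE !mxE; ring. Qed.
Lemma dotDr x y z : dot z (x + y) = dot z x + dot z y.
Proof. by rewrite dotC dotDl !(dotC z). Qed.
Lemma dotZr (k : R) x z : dot z (k *: x) = k * dot z x.
Proof. by rewrite dotC dotZl (dotC z). Qed.
Lemma dotBr x y z : dot z (x - y) = dot z x - dot z y.
Proof. by rewrite dotC dotBl !(dotC z). Qed.
Lemma dot_ge0 x : 0 <= dot x x.
Proof. rewrite dotE; nra. Qed.
Lemma dot_eq0 x : dot x x = 0 -> x = 0.
Proof.
rewrite dotE => H; apply/rowP => j; rewrite mxE.
have [h0 [h1 h2]] : x 0 0 = 0 /\ x 0 1 = 0 /\ x 0 2%:R = 0.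
  split; first nra. split; nra.
case: j => [[|[|[|j]]] Hj] //.
- by rewrite (_ : Ordinal Hj = 0) //; apply/val_inj.
- by rewrite (_ : Ordinal Hj = 1) //; apply/val_inj.
- by rewrite (_ : Ordinal Hj = 2%:R) //; apply/val_inj.
Qed.
Lemma sqrt_eq1 (a : R) : 0 <= a -> Num.sqrt a = 1 -> a = 1.
Proof. by move=> a0 h; rewrite -(sqr_sqrtr a0) h expr1n. Qed.

Lemma row2E (X : 'rV[R]_2) : X = X 0 0 *: eu R + X 0 1 *: ev R.
Proof.
apply/rowP => j; rewrite !mxE /=.
case: j => [[|[|j]] Hj] //=.
- rewrite (_ : Ordinal Hj = 0) //; last by apply/val_inj. simpl; ring.
- rewrite (_ : Ordinal Hj = 1) //; last by apply/val_inj. simpl; ring.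
Qed.
Lemma unit_eq (c v : 'rV[R]_3) : dot c c = 1 -> dot v v = 1 -> dot v c = 1 -> v = c.
Proof.
move=> cc vv vc; apply/eqP; rewrite -subr_eq0; apply/eqP; apply: dot_eq0.
rewrite dotBl !dotBr cc vv vc (dotC c v) vc; ring.
Qed.

Lemma va_eq_abs (a b c : 'rV[R]_3) (D : set 'rV[R]_3) (va : 'rV[R]_3) :
  dot c c = 1 ->
  (forall t : R, exists2 p, D p & forall w,
      dot p w = dot a w + 2 * t * dot b w + t ^+ 2 * dot c w) ->
  axial_vector D va -> va = c.
Proof.
move=> cc HP [[c0 [e [al [alpos ee vv ev HD]]]] | [c0 [vv HD]]].
- have HS : forall t : R, forall w, dot a w + 2 * t * dot b w + t ^+ 2 * dot c w =
     dot c0 w + (dot a e + 2 * t * dot b e + t ^+ 2 * dot c e - dot c0 e) * dot e w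
     + al * (dot a e + 2 * t * dot b e + t ^+ 2 * dot c e - dot c0 e) ^+ 2 * dot va w.
    move=> t; case: (HP t) => p; rewrite HD; case=> s _ <- Hp.
    have Hs : s = dot a e + 2 * t * dot b e + t ^+ 2 * dot c e - dot c0 e.
      rewrite -Hp !dotDl !dotZl ee (dotC va e) ev; ring.
    by move=> w; rewrite -Hp -Hs !dotDl !dotZl.
  pose S t := dot a e + 2 * t * dot b e + t ^+ 2 * dot c e - dot c0 e.
  pose gV t := dot c0 va + al * (S t) ^+ 2
     - (dot a va + 2 * t * dot b va + t ^+ 2 * dot c va).
  have HgV t : gV t = 0.
    rewrite /gV /S (HS t va) ev vv; ring.
  have E1 : 24 * (al * dot c e ^+ 2) =
      gV (-2) - 4 * gV (-1) + 6 * gV 0 - 4 * gV 1 + gV 2.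
    rewrite /gV /S; ring.
  rewrite !HgV in E1.
  have ce0 : dot c e = 0.
    have : al * dot c e ^+ 2 = 0 by lra.
    move/eqP; rewrite mulf_eq0 gt_eqF //= sqrf_eq0 => /eqP //.
  have E2 : 8 * al * dot b e ^+ 2 - 2 * dot c va = gV 1 + gV (-1) - 2 * gV 0.
    rewrite /gV /S ce0; ring.
  rewrite !HgV in E2.
  pose gC t := dot c0 c + S t * dot e c + al * (S t) ^+ 2 * dot va c
     - (dot a c + 2 * t * dot b c + t ^+ 2 * dot c c).
  have HgC t : gC t = 0 by rewrite /gC /S (HS t c); ring.
  have E3 : 8 * al * dot b e ^+ 2 * dot va c - 2 = gC 1 + gC (-1) - 2 * gC 0.
    rewrite /gC /S ce0 cc; ring.
  rewrite !HgC (dotC va c) in E3.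
  have cv1 : dot c va = 1.
    have h0 : 0 <= al * dot b e ^+ 2 by apply: mulr_ge0; [lra | apply: sqr_ge0].
    nra.
  by apply: unit_eq => //; rewrite dotC.
- have HS : forall t : R,
     0 <= dot a va + 2 * t * dot b va + t ^+ 2 * dot c va - dot c0 va /\
     forall w, dot a w + 2 * t * dot b w + t ^+ 2 * dot c w =
     dot c0 w + (dot a va + 2 * t * dot b va + t ^+ 2 * dot c va - dot c0 va) * dot va w.
    move=> t; case: (HP t) => p; rewrite HD; case=> s /= s0 <- Hp.
    have Hs : s = dot a va + 2 * t * dot b va + t ^+ 2 * dot c va - dot c0 va.
      rewrite -Hp !dotDl !dotZl vv; ring.
    by rewrite -Hs; split => // w; rewrite -Hp !dotDl !dotZl.
  pose S t := dot a va + 2 * t * dot b va + t ^+ 2 * dot c va - dot c0 va.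
  pose gC t := dot c0 c + S t * dot va c
     - (dot a c + 2 * t * dot b c + t ^+ 2 * dot c c).
  have HgC t : gC t = 0 by rewrite /gC /S ((HS t).2 c); ring.
  have E3 : 2 * dot c va * dot va c - 2 = gC 1 + gC (-1) - 2 * gC 0.
    rewrite /gC /S cc; ring.
  rewrite !HgC (dotC va c) in E3.
  have cv1 : dot c va = 1.
    have sq : dot c va ^+ 2 = 1 by lra.
    have [cpos|cneg] := lerP 0 (dot c va).
      nra.
    have cm1 : dot c va = -1 by nra.
    pose T := `|dot a va - dot c0 va| + 1.
    have h1 : dot a va - dot c0 va <= `|dot a va - dot c0 va| := ler_norm _.
    have h2 : 0 <= `|dot a va - dot c0 va| := normr_ge0 _.
    have hsum : S T + S (- T) = 2 * (dot a va - dot c0 va) + 2 * T ^+ 2 * dot c va.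
      by rewrite /S; ring.
    have : 0 <= S T + S (- T) by apply: addr_ge0; [exact: (HS T).1 | exact: (HS (-T)).1].
    rewrite hsum cm1 /T; nra.
  by apply: unit_eq => //; rewrite dotC.
Qed.

Lemma eu00 : eu R 0 0 = 1. Proof. by rewrite /eu mxE. Qed.
Lemma eu01 : eu R 0 1 = 0. Proof. by rewrite /eu mxE. Qed.
Lemma ev00 : ev R 0 0 = 0. Proof. by rewrite /ev mxE. Qed.
Lemma ev01 : ev R 0 1 = 1. Proof. by rewrite /ev mxE. Qed.

Definition Xt (t : R) : 'rV[R]_2 := eu R + t *: ev R.
Lemma Xt00 t : Xt t 0 0 = 1.
Proof. by rewrite /Xt !mxE /= mulr0 addr0. Qed.
Lemma Xt01 t : Xt t 0 1 = t.
Proof. by rewrite /Xt !mxE /= mulr1 add0r. Qed.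

Lemma dot3 (k1 k2 k3 : R) (x y z w : 'rV[R]_3) :
  dot (k1 *: x + k2 *: y + k3 *: z) w = k1 * dot x w + k2 * dot y w + k3 * dot z w.
Proof. by rewrite !dotDl !dotZl. Qed.

Lemma dperp_abs (w u c : 'rV[R]_3) (k : R) : dot u c = 0 -> dot (w - k *: u) c = dot w c.
Proof. by move=> h; rewrite dotBl dotZl h mulr0 subr0. Qed.

Lemma ring_aux (x y z t : R) :
  1 * 1 * x + (1 * t + t * 1) * y + t * t * z = x + 2 * t * y + t ^+ 2 * z.
Proof. ring. Qed.

Lemma min_abs (II : 'rV[R]_2 -> 'rV[R]_3) (I : 'rV[R]_2 -> R) (a b c va : 'rV[R]_3) (A B : R) :
  (forall X, I X = X 0 0 ^+ 2) ->
  (forall X w, dot (II X) w = X 0 0 * X 0 0 * dot a w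
     + (X 0 0 * X 0 1 + X 0 1 * X 0 0) * dot b w + X 0 1 * X 0 1 * dot c w) ->
  dot c va = 1 -> dot a va = A -> dot b va = B ->
  is_min [set dot (II X) va | X in [set X | I X = 1]] (A - B ^+ 2).
Proof.
move=> HI HII cv <- <-; split.
- hnf; exists (Xt (- dot b va)); first by rewrite /= HI Xt00 expr1n.
  rewrite HII Xt00 Xt01 cv; ring.
- move=> y [X /= HX <-]; rewrite HII cv; move: HX; rewrite HI => HX.
  have e : X 0 0 * X 0 0 = 1 by rewrite -expr2.
  have h : (X 0 1 + X 0 0 * dot b va) ^+ 2 = X 0 1 * X 0 1
     + (X 0 0 * X 0 1 + X 0 1 * X 0 0) * dot b va + dot b va ^+ 2 * (X 0 0 * X 0 0) by ring.
  rewrite e mulr1 in h; rewrite e mul1r.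
  have := sqr_ge0 (X 0 1 + X 0 0 * dot b va); rewrite h; lra.
Qed.

Variables (f : 'rV[R]_2 -> 'rV[R]_3) (q : 'rV[R]_2).
Hypothesis fdiff : differentiable f q.
Hypothesis fv0 : f_v f q = 0.
Hypothesis uu : dot (f_u f q) (f_u f q) = 1.

Lemma dfE X : df f q X = X 0 0 *: f_u f q.
Proof.
rewrite /df {1}(row2E X) deriveE // linearD !linearZ /= -!deriveE //.
by move: fv0; rewrite /f_v => ->; rewrite scaler0 addr0.
Qed.

Lemma perpE w : perp f q w = w - dot w (f_u f q) *: f_u f q.
Proof.
set u := f_u f q.
set n0 := w - dot w u *: u.
have Pn0 : Defs.normal_space f q n0 /\ tangent_space f q (w - n0).
  split.
    move=> t [X _ <-]; rewrite dfE dotZr /n0 dotBl dotZl uu; ring.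
  exists (dot w u *: eu R) => //.
  by rewrite dfE !mxE /= mulr1 /n0 opprB addrC subrK.
have : [set n | Defs.normal_space f q n /\ tangent_space f q (w - n)] (perp f q w).
  by apply: xgetPex; exists n0.
set m := perp f q w; case=> Hn [X _ HX].
have Hm : m = w - X 0 0 *: u by rewrite -dfE HX opprB addrC subrK.
have := Hn (df f q (eu R)) (ex_intro2 _ _ _ I erefl).
rewrite dfE eu00 scale1r Hm dotBl dotZl uu mulr1 => /eqP; rewrite subr_eq0 => /eqP <-.
by [].
Qed.

Hypothesis uc : dot (f_u f q) (f_vv f q) = 0.

Lemma pc : perp f q (f_vv f q) = f_vv f q.
Proof. by rewrite perpE // dotC uc scale0r subr0. Qed.

Lemma IIdot X w : dot (II_ff f q X X) w =
  (X 0 0 * X 0 0) * dot (perp f q (f_uu f q)) w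
  + (X 0 0 * X 0 1 + X 0 1 * X 0 0) * dot (perp f q (f_uv f q)) w
  + (X 0 1 * X 0 1) * dot (f_vv f q) w.
Proof.
rewrite /II_ff (dot3 _ _ _ (perp f q (f_uu f q)) (perp f q (f_uv f q)) (perp f q (f_vv f q))).
by congr (_ + _ * dot _ _); exact: pc.
Qed.

Lemma IX X : I_ff f q X X = X 0 0 ^+ 2.
Proof. by rewrite /I_ff dfE dotZl dotZr uu; ring. Qed.

Lemma Pt t : curvature_parabola f q (II_ff f q (Xt t) (Xt t)).
Proof. by exists (Xt t) => //; rewrite /= IX Xt00 expr1n. Qed.

End H.

Theorem mainTheorem3 (R : realType) (f : 'rV[R]_2 -> 'rV[R]_3) (q : 'rV[R]_2) :
  smooth f ->
  corank1 f q ->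
  nondegenerate_parabola (curvature_parabola f q) \/
    half_line (curvature_parabola f q) ->
  f_u f q != 0 ->
  f_v f q = 0 ->
  Num.sqrt (dot (f_u f q) (f_u f q)) = 1 ->
  Num.sqrt (dot (f_vv f q) (f_vv f q)) = 1 ->
  dot (f_u f q) (f_vv f q) = 0 ->
  forall va : 'rV[R]_3, axial_vector (curvature_parabola f q) va ->
  is_axial_curvature f q va
    (dot (f_uu f q) (f_vv f q) - (dot (f_uv f q) (f_vv f q)) ^+ 2).
Proof.
move=> sm _ _ _ fv0 su svv uvv va Hva.
have fd : differentiable f q := sm [::] q.
have uu := sqrt_eq1 (dot_ge0 _) su.
have cc := sqrt_eq1 (dot_ge0 _) svv.
have vaE : va = f_vv f q.
  apply: (va_eq_abs (a := perp f q (f_uu f q)) (b := perp f q (f_uv f q))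
            (D := curvature_parabola f q) cc _ Hva).
  move=> t; exists (II_ff f q (Xt t) (Xt t)); first exact: Pt.
  move=> w; rewrite (IIdot fd fv0 uu uvv (Xt t) w) Xt00 Xt01.
  exact: ring_aux.
subst va.
rewrite /is_axial_curvature.
apply: (min_abs (II := fun X => II_ff f q X X) (I := fun X => I_ff f q X X)
          (a := perp f q (f_uu f q)) (b := perp f q (f_uv f q)) (c := f_vv f q)).
- exact: (IX fd fv0 uu).
- exact: (IIdot fd fv0 uu uvv).
- exact: cc.
- by rewrite (perpE fd fv0 uu (f_uu f q)); apply: dperp_abs.
- by rewrite (perpE fd fv0 uu (f_uv f q)); apply: dperp_abs.
Qed.
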